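(* For every complex $s$ with $\Re(s)>3$, \[\sum_{k=1}^\infty k\,\zeta(s,2k)=\tfrac{1}{8}\Big\{(1+2^{1-s})\zeta(s-1)+\zeta(s-2)-2^{1-s}\Big(\zeta\big(s-1,\tfrac12\big)+\tfrac12 \zeta\big(s,\tfrac12\big)\Big)\Big\}.\]
   Context: $\zeta(s,\alpha)=\sum_{n=0}^\infty (n+\alpha)^{-s}$ denotes the Hurwitz zeta function ($\Re(s)>1$, $\alpha>0$), and $\zeta(s)=\zeta(s,1)$ is the Riemann zeta function. *)

(* Defs.v *)
From Stdlib Require Import Reals.
From Coquelicot Require Import Coquelicot.
Open Scope R_scope.

(* Complex power x^w for a real base x > 0 with principal logarithm:
   x^w = exp(w * ln x) = exp(Re w ln x) (cos(Im w ln x) + i sin(Im w ln x)). *)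
Definition cpow_pos (x : R) (w : C) : C :=
  (exp (Re w * ln x) * cos (Im w * ln x),
   exp (Re w * ln x) * sin (Im w * ln x)).

(* Sum of a complex series, defined componentwise (the value of the series
   when it converges). *)
Definition CSeries (a : nat -> C) : C :=
  (Series (fun n => Re (a n)), Series (fun n => Im (a n))).

Definition hurwitz_zeta (s : C) (alpha : R) : C :=
  CSeries (fun n => cpow_pos (INR n + alpha) (Copp s)).

Definition riemann_zeta (s : C) : C := hurwitz_zeta s 1.

(* Main.v *)
Require Import Defs.
From Stdlib Require Import Reals Lra Lia.
From Coquelicot Require Import Coquelicot.
Open Scope R_scope.

Lemma cpow_add x w1 w2 : cpow_pos x (Cplus w1 w2) = Cmult (cpow_pos x w1) (cpow_pos x w2).
Proof.
  destruct w1 as [a b], w2 as [c d]; unfold cpow_pos, Cmult, Cplus; simpl.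
  rewrite !Rmult_plus_distr_r, exp_plus, cos_plus, sin_plus.
  f_equal; ring.
Qed.

Lemma cpow_mul x y w : 0 < x -> 0 < y ->
  cpow_pos (x * y) w = Cmult (cpow_pos x w) (cpow_pos y w).
Proof.
  intros hx hy. destruct w as [a b]; unfold cpow_pos, Cmult; simpl.
  rewrite ln_mult by auto.
  rewrite !Rmult_plus_distr_l, exp_plus, cos_plus, sin_plus.
  f_equal; ring.
Qed.

Lemma cpow_one x : 0 < x -> cpow_pos x (RtoC 1) = RtoC x.
Proof.
  intros hx; unfold cpow_pos, RtoC; simpl.
  rewrite Rmult_1_l, Rmult_0_l, exp_ln, cos_0, sin_0 by auto. f_equal; ring.
Qed.

Lemma cpow_base1 w : cpow_pos 1 w = RtoC 1.
Proof.
  unfold cpow_pos, RtoC; rewrite ln_1, !Rmult_0_r, exp_0, cos_0, sin_0. f_equal; ring.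
Qed.

Lemma cpow_norm x w : Cmod (cpow_pos x w) = exp (Re w * ln x).
Proof.
  unfold cpow_pos, Cmod; simpl.
  set (e := exp _). set (t := Im w * ln x).
  replace (e * cos t * (e * cos t * 1) + e * sin t * (e * sin t * 1)) with (e * e).
  - rewrite sqrt_square; auto. left; apply exp_pos.
  - pose proof (sin2_cos2 t). unfold Rsqr in *. transitivity (e*e*(sin t * sin t + cos t * cos t)).
    rewrite H; ring. ring.
Qed.

Lemma CS_plus (a b : nat -> C) la lb : is_series a la -> is_series b lb ->
  is_series (fun n => Cplus (a n) (b n)) (Cplus la lb).
Proof. intros; apply (is_series_plus a b la lb); auto. Qed.

Lemma CS_scal (a : nat -> C) l (k : C) : is_series a l ->
  is_series (fun n => Cmult k (a n)) (Cmult k l).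
Proof. intros H; apply (is_series_scal_l k a l H). Qed.

Lemma CS_ext (a b : nat -> C) l : (forall n, a n = b n) -> is_series a l -> is_series b l.
Proof. intros; eapply is_series_ext; eauto. Qed.

Lemma CS_unique (a : nat -> C) l1 l2 : is_series a l1 -> is_series a l2 -> l1 = l2.
Proof. intros H1 H2.
 exact (@filterlim_locally_unique nat C_AbsRing C_NormedModule eventually (Proper_StrongProper _ eventually_filter) (sum_n a) l1 l2 H1 H2). Qed.

Lemma ln_le_sub1 y : 0 < y -> ln y <= y - 1.
Proof. intros hy. pose proof (exp_ineq1_le (ln y)). rewrite exp_ln in H by auto. lra. Qed.

Lemma tele sg x : 1 < sg -> 0 < x ->
  (sg - 1) * exp (- sg * ln (x + 1)) <= exp ((1 - sg) * ln x) - exp ((1 - sg) * ln (x + 1)).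
Proof.
  intros hs hx.
  set (A := ln (x + 1)). set (B := ln x).
  assert (hL : / (x + 1) <= A - B).
  { assert (h1 : ln (x / (x + 1)) <= x / (x + 1) - 1) by (apply ln_le_sub1; apply Rdiv_lt_0_compat; lra).
    unfold Rdiv in h1. rewrite ln_mult in h1 by (try apply Rinv_0_lt_compat; lra).
    rewrite ln_Rinv in h1 by lra. fold B A in h1.
    replace (x * / (x + 1) - 1) with (- / (x+1)) in h1 by (field; lra). lra. }
  assert (hB : exp ((1 - sg) * B) = exp ((1 - sg) * A) * exp ((sg - 1) * (A - B))).
  { rewrite <- exp_plus. f_equal. ring. }
  assert (hE : exp ((sg - 1) * (A - B)) >= 1 + (sg - 1) * (A - B)) by (apply Rle_ge, exp_ineq1_le).
  assert (hS : exp (- sg * A) = exp ((1 - sg) * A) * / (x + 1)).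
  { replace (- sg * A) with ((1 - sg) * A + - A) by ring. rewrite exp_plus.
    unfold A. rewrite exp_Ropp, exp_ln by lra. reflexivity. }
  rewrite hB, hS.
  assert (hp : 0 < exp ((1 - sg) * A)) by apply exp_pos.
  assert (hq : (sg - 1) * / (x + 1) <= (sg - 1) * (A - B)) by (apply Rmult_le_compat_l; lra).
  assert (exp ((1 - sg) * A) * ((sg - 1) * / (x + 1)) <= exp ((1 - sg) * A) * (exp ((sg - 1) * (A - B)) - 1)).
  { apply Rmult_le_compat_l; lra. }
  nra.
Qed.

Lemma sum_n_R_S (a : nat -> R) n : sum_n a (S n) = sum_n a n + a (S n).
Proof. rewrite sum_Sn. reflexivity. Qed.

Lemma sum_n_R_O (a : nat -> R) : sum_n a 0 = a 0%nat.
Proof. apply sum_O. Qed.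

Lemma le_div_helper a b c : 0 < c -> c * a <= b -> a <= b / c.
Proof.
  intros hc h. replace a with ((c * a) / c) by (field; lra).
  unfold Rdiv. apply Rmult_le_compat_r; auto. left; apply Rinv_0_lt_compat; auto.
Qed.

Lemma psum_bound sg x0 N : 1 < sg -> 0 < x0 ->
  sum_n (fun n => exp (- sg * ln (INR n + x0 + 1))) N <=
  (exp ((1 - sg) * ln x0) - exp ((1 - sg) * ln (INR N + x0 + 1))) / (sg - 1).
Proof.
  intros hs hx. induction N as [|N IH].
  - rewrite sum_n_R_O. simpl INR. rewrite Rplus_0_l.
    pose proof (tele sg x0 hs hx). apply le_div_helper; lra.
  - rewrite sum_n_R_S.
    assert (hx' : 0 < INR N + x0 + 1) by (pose proof (pos_INR N); lra).
    pose proof (tele sg _ hs hx').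
    replace (INR (S N) + x0 + 1) with (INR N + x0 + 1 + 1) by (rewrite S_INR; ring).
    apply le_div_helper; [lra|].
    assert (h := Rmult_le_compat_l (sg - 1) _ _ ltac:(lra) IH).
    replace ((sg - 1) * ((exp ((1 - sg) * ln x0) - exp ((1 - sg) * ln (INR N + x0 + 1))) / (sg - 1)))
      with (exp ((1 - sg) * ln x0) - exp ((1 - sg) * ln (INR N + x0 + 1))) in h by (field; lra).
    lra.
Qed.

Lemma pser_shift sg x0 : 1 < sg -> 0 < x0 ->
  ex_series (fun n => exp (- sg * ln (INR n + x0 + 1))) /\
  Series (fun n => exp (- sg * ln (INR n + x0 + 1))) <= exp ((1 - sg) * ln x0) / (sg - 1).
Proof.
  intros hs hx.
  set (a := fun n => exp (- sg * ln (INR n + x0 + 1))).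
  assert (hb : forall N, sum_n a N <= exp ((1 - sg) * ln x0) / (sg - 1)).
  { intros N. eapply Rle_trans. apply psum_bound; auto.
    unfold Rdiv. apply Rmult_le_compat_r. left; apply Rinv_0_lt_compat; lra.
    pose proof (exp_pos ((1 - sg) * ln (INR N + x0 + 1))). lra. }
  assert (hex : ex_series a).
  { assert (hf : ex_finite_lim_seq (sum_n a)).
    { apply ex_finite_lim_seq_incr with (M := exp ((1 - sg) * ln x0) / (sg - 1)); auto.
      intros n. rewrite sum_n_R_S. unfold a. pose proof (exp_pos (- sg * ln (INR (S n) + x0 + 1))). lra. }
    destruct hf as [l hl]. exists l. exact hl. }
  split; auto.
  pose proof (Series_correct _ hex) as hc.
  assert (hl := is_lim_seq_le (sum_n a) (fun _ => exp ((1 - sg) * ln x0) / (sg - 1)) (Series a) (exp ((1 - sg) * ln x0) / (sg - 1)) hb hc (is_lim_seq_const _)).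
  simpl in hl. exact hl.
Qed.

Lemma pser_ex sg al : 1 < sg -> 0 < al -> ex_series (fun n => exp (- sg * ln (INR n + al))).
Proof.
  intros hs ha. apply ex_series_incr_1.
  destruct (pser_shift sg al hs ha) as [h _].
  eapply ex_series_ext; [|exact h]. intros n. rewrite (S_INR n). f_equal. f_equal. f_equal. ring.
Qed.

Lemma sum_n_re (a : nat -> C) N : sum_n (fun n => Re (a n)) N = Re (sum_n a N).
Proof.
  induction N as [|N IH]. - rewrite !sum_O. reflexivity.
  - rewrite !sum_Sn, IH. unfold plus. simpl. reflexivity.
Qed.
Lemma sum_n_im (a : nat -> C) N : sum_n (fun n => Im (a n)) N = Im (sum_n a N).
Proof.
  induction N as [|N IH]. - rewrite !sum_O. reflexivity.
  - rewrite !sum_Sn, IH. unfold plus. simpl. reflexivity.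
Qed.

Lemma CS_re (a : nat -> C) l : is_series a l -> is_series (fun n => Re (a n)) (Re l).
Proof.
  intros H. unfold is_series in *. apply filterlim_locally. intros eps.
  generalize (proj1 (filterlim_locally _ _) H eps). apply filter_imp.
  intros N [h1 h2]. rewrite sum_n_re. exact h1.
Qed.
Lemma CS_im (a : nat -> C) l : is_series a l -> is_series (fun n => Im (a n)) (Im l).
Proof.
  intros H. unfold is_series in *. apply filterlim_locally. intros eps.
  generalize (proj1 (filterlim_locally _ _) H eps). apply filter_imp.
  intros N [h1 h2]. rewrite sum_n_im. exact h2.
Qed.

Lemma CS_val (a : nat -> C) l : is_series a l -> CSeries a = l.
Proof.
  intros H. unfold CSeries. rewrite (is_series_unique _ _ (CS_re a l H)), (is_series_unique _ _ (CS_im a l H)).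
  destruct l; reflexivity.
Qed.

Lemma CS_norm_le (a : nat -> C) l L : is_series a l -> is_series (fun n => Cmod (a n)) L -> Cmod l <= L.
Proof.
  intros H1 H2.
  assert (h3 : is_lim_seq (fun N => norm (sum_n a N)) (norm l)).
  { eapply filterlim_comp. exact H1. apply filterlim_norm. }
  assert (hle : forall N, norm (sum_n a N) <= sum_n (fun n => Cmod (a n)) N).
  { intros N. unfold sum_n. eapply Rle_trans. exact (norm_sum_n_m (K:=C_AbsRing) (V:=C_NormedModule) a 0 N). right. apply sum_n_m_ext. intros; reflexivity. }
  pose proof (is_lim_seq_le _ _ (norm l) L hle h3 H2). simpl in H. exact H.
Qed.

Lemma hz_is s al : 1 < Re s -> 0 < al ->
  is_series (fun n => cpow_pos (INR n + al) (Copp s)) (hurwitz_zeta s al).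
Proof.
  intros hs ha.
  assert (hex : ex_series (V := C_CompleteNormedModule) (fun n => cpow_pos (INR n + al) (Copp s))).
  { apply ex_series_le with (b := fun n => exp (- Re s * ln (INR n + al))).
    - intros n. change (Cmod (cpow_pos (INR n + al) (Copp s)) <= exp (- Re s * ln (INR n + al))).
      rewrite cpow_norm. right. reflexivity.
    - apply pser_ex; auto. }
  destruct hex as [l hl].
  unfold hurwitz_zeta. rewrite (CS_val _ l hl). exact hl.
Qed.

Ltac cring := apply injective_projections; unfold Cminus, Cplus, Cmult, Copp, RtoC; cbn [fst snd]; field.
Ltac cfield := apply injective_projections; unfold Cminus, Cplus, Cmult, Copp, RtoC; cbn [fst snd]; field.

Lemma hz_arg s a b : a = b -> hurwitz_zeta s a = hurwitz_zeta s b.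
Proof. intros ->; reflexivity. Qed.
Lemma cp_arg x y w : x = y -> cpow_pos x w = cpow_pos y w.
Proof. intros ->; reflexivity. Qed.
Lemma cp_exp x w1 w2 : w1 = w2 -> cpow_pos x w1 = cpow_pos x w2.
Proof. intros ->; reflexivity. Qed.

Lemma CS_shift (a : nat -> C) l : is_series a l -> is_series (fun n => a (S n)) (Cminus l (a 0%nat)).
Proof.
  intros H. apply (is_series_incr_1 (K:=C_AbsRing) (V:=C_NormedModule)).
  match goal with |- is_series _ ?x => replace x with l end. exact H.
  unfold plus; simpl. cring.
Qed.

Lemma hz_step s al : 1 < Re s -> 0 < al ->
  hurwitz_zeta s al = Cplus (cpow_pos al (Copp s)) (hurwitz_zeta s (al + 1)).
Proof.
  intros hs ha.
  pose proof (CS_shift _ _ (hz_is s al hs ha)) as H2.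
  assert (H3 : is_series (fun n => cpow_pos (INR n + (al + 1)) (Copp s))
                 (Cminus (hurwitz_zeta s al) (cpow_pos (INR 0 + al) (Copp s)))).
  { eapply CS_ext; [|exact H2]. intros n. cbv beta. apply cp_arg. rewrite S_INR. ring. }
  change (INR 0) with 0 in H3.
  pose proof (hz_is s (al + 1) hs ltac:(lra)) as H4.
  rewrite (CS_unique _ _ _ H4 H3). rewrite Rplus_0_l. cring.
Qed.

Lemma hz_step2 s al : 1 < Re s -> 0 < al ->
  hurwitz_zeta s al = Cplus (Cplus (cpow_pos al (Copp s)) (cpow_pos (al + 1) (Copp s))) (hurwitz_zeta s (al + 2)).
Proof.
  intros hs ha. rewrite (hz_step s al hs ha), (hz_step s (al + 1) hs ltac:(lra)).
  rewrite (hz_arg s (al + 1 + 1) (al + 2)) by ring. cring.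
Qed.

Lemma sum_n_group (a : nat -> C) J :
  sum_n (fun j => Cplus (a (2 * j)%nat) (a (S (2 * j)))) J = sum_n a (S (2 * J)).
Proof.
  induction J as [|J IH].
  - rewrite sum_O. simpl. rewrite sum_Sn, sum_O. reflexivity.
  - rewrite sum_Sn, IH.
    replace (S (2 * S J)) with (S (S (S (2 * J)))) by lia.
    rewrite (sum_Sn a (S (S (2 * J)))), (sum_Sn a (S (2 * J))).
    replace (2 * S J)%nat with (S (S (2 * J))) by lia.
    unfold plus; simpl. cring.
Qed.

Lemma CS_group (a : nat -> C) l : is_series a l ->
  is_series (fun j => Cplus (a (2 * j)%nat) (a (S (2 * j)))) l.
Proof.
  intros H. unfold is_series in *.
  eapply filterlim_ext. intros J. symmetry. apply sum_n_group.
  eapply filterlim_comp; [|exact H].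
  intros P [N HN]. exists N. intros n hn. apply HN. lia.
Qed.

Lemma cpow_succ x w : 0 < x -> cpow_pos x (Cplus (RtoC 1) w) = Cmult (RtoC x) (cpow_pos x w).
Proof. intros hx. rewrite cpow_add, cpow_one by auto. reflexivity. Qed.

Definition Qt s j := Cmult (RtoC ((INR j + 1) * (INR j + 2) / 2))
  (Cplus (cpow_pos (2 * INR j + 2) (Copp s)) (cpow_pos (2 * INR j + 3) (Copp s))).
Definition Bt s M := Cmult (RtoC ((INR M + 1) * (INR M + 2) / 2)) (hurwitz_zeta s (2 * INR M + 4)).
Definition Tt s m := Cmult (RtoC (INR (S m))) (hurwitz_zeta s (2 * INR (S m))).

Lemma lhs_partial s M : 1 < Re s -> sum_n (Tt s) M = Cplus (sum_n (Qt s) M) (Bt s M).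
Proof.
  intros hs. induction M as [|M IH].
  - rewrite !sum_O. unfold Tt, Qt, Bt. change (INR 1) with 1. change (INR 0) with 0.
    rewrite (hz_step2 s (2 * 1)) by lra.
    rewrite (cp_arg (2 * 1) (2 * 0 + 2)) by ring.
    rewrite (cp_arg (2 * 1 + 1) (2 * 0 + 3)) by ring.
    rewrite (hz_arg s (2 * 1 + 2) (2 * 0 + 4)) by ring.
    cring.
  - rewrite !sum_Sn, IH. unfold plus; simpl.
    unfold Tt, Qt, Bt.
    rewrite (hz_arg s (2 * INR (S (S M))) (2 * INR M + 4)) by (rewrite !S_INR; ring).
    pose proof (pos_INR M).
    rewrite (hz_step2 s (2 * INR M + 4)) by lra.
    rewrite (cp_arg (2 * INR M + 4) (2 * INR (S M) + 2)) by (rewrite !S_INR; ring).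
    rewrite (cp_arg (2 * INR M + 4 + 1) (2 * INR (S M) + 3)) by (rewrite !S_INR; ring).
    rewrite (hz_arg s (2 * INR M + 4 + 2) (2 * INR (S M) + 4)) by (rewrite !S_INR; ring).
    generalize (cpow_pos (2 * INR (S M) + 2) (Copp s)) (cpow_pos (2 * INR (S M) + 3) (Copp s))
      (hurwitz_zeta s (2 * INR (S M) + 4)) (sum_n (Qt s) M).
    intros u v h q. rewrite !S_INR. cfield.
Qed.

Lemma decay d : 0 < d -> is_lim_seq (fun M => exp (- d * ln (2 * INR M + 3))) 0.
Proof.
  intros hd. apply is_lim_seq_spec. intros eps.
  set (K := - ln eps / d).
  pose proof is_lim_seq_INR as HI. apply is_lim_seq_spec in HI.
  generalize (HI (exp K)). apply filter_imp. intros n hn.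
  pose proof (pos_INR n).
  rewrite Rminus_0_r, Rabs_pos_eq by (left; apply exp_pos).
  assert (h1 : K < ln (2 * INR n + 3)).
  { rewrite <- (ln_exp K). apply ln_increasing. apply exp_pos. lra. }
  assert (h2 : - d * ln (2 * INR n + 3) < ln eps).
  { unfold K in h1. apply Rmult_lt_compat_l with (r := d) in h1; auto.
    replace (d * (- ln eps / d)) with (- ln eps) in h1 by (field; lra). lra. }
  rewrite <- (exp_ln eps) by apply cond_pos. apply exp_increasing; auto.
Qed.

Lemma Bt_bound s M : 3 < Re s ->
  Cmod (Bt s M) <= exp (- (Re s - 3) * ln (2 * INR M + 3)) / (Re s - 1).
Proof.
  intros hs. pose proof (pos_INR M) as hM.
  unfold Bt. rewrite Cmod_mult, Cmod_R.
  set (x0 := 2 * INR M + 3).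
  assert (hx0 : 0 < x0) by (unfold x0; lra).
  destruct (pser_shift (Re s) x0 ltac:(lra) hx0) as [hex hle].
  assert (hn : Cmod (hurwitz_zeta s (2 * INR M + 4)) <= exp ((1 - Re s) * ln x0) / (Re s - 1)).
  { eapply Rle_trans; [|exact hle].
    apply (CS_norm_le (fun n => cpow_pos (INR n + (2 * INR M + 4)) (Copp s))).
    apply hz_is; lra.
    eapply is_series_ext; [|apply Series_correct; exact hex].
    intros n. rewrite cpow_norm. simpl Re. f_equal. f_equal. f_equal. unfold x0. ring. }
  assert (hc : 0 <= (INR M + 1) * (INR M + 2) / 2 <= x0 * x0).
  { unfold x0; split; [apply Rmult_le_pos; [nra|lra]|]. unfold Rdiv. nra. }
  rewrite Rabs_pos_eq by lra.
  assert (hxx : x0 * x0 * exp ((1 - Re s) * ln x0) = exp (- (Re s - 3) * ln x0)).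
  { replace (- (Re s - 3) * ln x0) with (ln x0 + ln x0 + (1 - Re s) * ln x0) by ring.
    rewrite !exp_plus, exp_ln by auto. ring. }
  assert (hz0 : 0 <= Cmod (hurwitz_zeta s (2 * INR M + 4))) by apply Cmod_ge_0.
  apply Rle_trans with (x0 * x0 * (exp ((1 - Re s) * ln x0) / (Re s - 1))).
  - apply Rmult_le_compat; lra.
  - right. unfold Rdiv. rewrite <- Rmult_assoc, hxx. reflexivity.
Qed.

Lemma Bt_lim s : 3 < Re s -> filterlim (Bt s) eventually (locally (RtoC 0)).
Proof.
  intros hs. apply (filterlim_norm_zero (Bt s)).
  assert (h := is_lim_seq_scal_r _ (/ (Re s - 1)) _ (decay (Re s - 3) ltac:(lra))).
  simpl in h. rewrite Rmult_0_l in h.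
  assert (h2 : is_lim_seq (fun M => norm (Bt s M)) 0).
  { apply is_lim_seq_le_le with (u := fun _ => 0) (w := fun M => exp (- (Re s - 3) * ln (2 * INR M + 3)) * / (Re s - 1)).
    - intros n. split. apply norm_ge_0. apply (Bt_bound s n hs).
    - apply is_lim_seq_const.
    - exact h. }
  exact h2.
Qed.

Lemma lhs_from_Q s V : 3 < Re s -> is_series (Qt s) V -> is_series (Tt s) V.
Proof.
  intros hs HQ. unfold is_series in *.
  assert (HB := Bt_lim s hs).
  assert (HP := filterlim_comp_2 (F := eventually) (sum_n (Qt s)) (Bt s) plus HQ HB (filterlim_plus V (RtoC 0))).
  apply (filterlim_ext (fun M => plus (sum_n (Qt s) M) (Bt s M))).
  - intros M. symmetry. etransitivity. exact (lhs_partial s M ltac:(lra)). unfold plus; simpl. reflexivity.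
  - replace V with (plus V (RtoC 0)). exact HP.
    unfold plus; simpl. cring.
Qed.



Lemma INR_double j : INR (2 * j) = 2 * INR j.
Proof. rewrite mult_INR. reflexivity. Qed.

Lemma Q_term s j : Qt s j =
  Cplus (Cplus
    (Cmult (RtoC (1/8)) (Cplus (cpow_pos (INR (S (2 * j)) + 1) (Copp (Cminus s (RtoC 2))))
                               (cpow_pos (INR (S (S (2 * j))) + 1) (Copp (Cminus s (RtoC 2))))))
    (Cmult (RtoC (1/4)) (Cmult (cpow_pos 2 (Copp (Cminus s (RtoC 1))))
                               (cpow_pos (INR j + 1) (Copp (Cminus s (RtoC 1)))))))
    (Cmult (RtoC (- (1/8))) (Cmult (cpow_pos 2 (Copp s)) (cpow_pos (INR (S j) + 1/2) (Copp s)))).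
Proof.
  pose proof (pos_INR j) as hj.
  rewrite (cp_arg (INR (S (2 * j)) + 1) (2 * INR j + 2)) by (rewrite S_INR, INR_double; ring).
  rewrite (cp_arg (INR (S (S (2 * j))) + 1) (2 * INR j + 3)) by (rewrite !S_INR, INR_double; ring).
  rewrite !(cp_exp _ (Copp (Cminus s (RtoC 2))) (Cplus (RtoC 1) (Cplus (RtoC 1) (Copp s)))) by cring.
  rewrite !(cp_exp _ (Copp (Cminus s (RtoC 1))) (Cplus (RtoC 1) (Copp s))) by cring.
  rewrite <- (cpow_mul 2 (INR j + 1)) by lra.
  rewrite <- (cpow_mul 2 (INR (S j) + 1/2)) by (try rewrite S_INR; lra).
  rewrite (cp_arg (2 * (INR j + 1)) (2 * INR j + 2)) by ring.
  rewrite (cp_arg (2 * (INR (S j) + 1/2)) (2 * INR j + 3)) by (rewrite S_INR; field).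
  rewrite !cpow_succ by lra.
  unfold Qt.
  generalize (cpow_pos (2 * INR j + 2) (Copp s)) (cpow_pos (2 * INR j + 3) (Copp s)).
  intros u v. cfield.
Qed.

Lemma Re_sub s a : Re (Cminus s (RtoC a)) = Re s - a.
Proof. unfold Cminus, Cplus, Copp, RtoC, Re. simpl. ring. Qed.

Lemma Q_series s : 3 < Re s ->
  is_series (Qt s)
   (Cplus (Cplus
     (Cmult (RtoC (1/8)) (Cminus (hurwitz_zeta (Cminus s (RtoC 2)) 1) (cpow_pos (INR 0 + 1) (Copp (Cminus s (RtoC 2))))))
     (Cmult (RtoC (1/4)) (Cmult (cpow_pos 2 (Copp (Cminus s (RtoC 1)))) (hurwitz_zeta (Cminus s (RtoC 1)) 1))))
     (Cmult (RtoC (- (1/8))) (Cmult (cpow_pos 2 (Copp s)) (Cminus (hurwitz_zeta s (1/2)) (cpow_pos (INR 0 + 1/2) (Copp s)))))).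
Proof.
  intros hs.
  assert (H2 := CS_group _ _ (CS_shift _ _ (hz_is (Cminus s (RtoC 2)) 1 ltac:(rewrite Re_sub; lra) ltac:(lra)))).
  assert (H1 := hz_is (Cminus s (RtoC 1)) 1 ltac:(rewrite Re_sub; lra) ltac:(lra)).
  assert (H0 := CS_shift _ _ (hz_is s (1/2) ltac:(lra) ltac:(lra))).
  assert (H := CS_plus _ _ _ _ (CS_plus _ _ _ _ (CS_scal _ _ (RtoC (1/8)) H2)
                  (CS_scal _ _ (RtoC (1/4)) (CS_scal _ _ (cpow_pos 2 (Copp (Cminus s (RtoC 1)))) H1)))
                  (CS_scal _ _ (RtoC (- (1/8))) (CS_scal _ _ (cpow_pos 2 (Copp s)) H0))).
  eapply CS_ext; [|exact H]. intros j. simpl. rewrite Q_term. reflexivity.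
Qed.

Lemma R1 s : 3 < Re s ->
  hurwitz_zeta (Cminus s (RtoC 1)) 1 =
  Cmult (cpow_pos 2 (Copp (Cminus s (RtoC 1))))
        (Cplus (hurwitz_zeta (Cminus s (RtoC 1)) (1/2)) (hurwitz_zeta (Cminus s (RtoC 1)) 1)).
Proof.
  intros hs.
  assert (H1 := hz_is (Cminus s (RtoC 1)) 1 ltac:(rewrite Re_sub; lra) ltac:(lra)).
  assert (Hb := hz_is (Cminus s (RtoC 1)) (1/2) ltac:(rewrite Re_sub; lra) ltac:(lra)).
  assert (Hg := CS_group _ _ H1).
  assert (H := CS_scal _ _ (cpow_pos 2 (Copp (Cminus s (RtoC 1)))) (CS_plus _ _ _ _ Hb H1)).
  apply (CS_unique _ _ _ Hg). eapply CS_ext; [|exact H].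
  intros j. cbv beta. pose proof (pos_INR j).
  rewrite Cmult_plus_distr_l.
  rewrite <- !cpow_mul by lra.
  f_equal; apply cp_arg; rewrite ?S_INR, INR_double; field.
Qed.

Theorem mainTheorem10 (s : C) (hs : 3 < Re s) :
  is_series (fun m : nat => Cmult (RtoC (INR (S m))) (hurwitz_zeta s (2 * INR (S m))))
    (Cmult (RtoC (1 / 8))
       (Cminus
          (Cplus
             (Cmult (Cplus (RtoC 1) (cpow_pos 2 (Cminus (RtoC 1) s)))
                    (riemann_zeta (Cminus s (RtoC 1))))
             (riemann_zeta (Cminus s (RtoC 2))))
          (Cmult (cpow_pos 2 (Cminus (RtoC 1) s))
             (Cplus (hurwitz_zeta (Cminus s (RtoC 1)) (1 / 2))
                    (Cmult (RtoC (1 / 2)) (hurwitz_zeta s (1 / 2))))))).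
Proof.
  apply (lhs_from_Q s _ hs).
  pose proof (Q_series s hs) as HQ.
  pose proof (R1 s hs) as hR1.
  assert (hR3 : cpow_pos 2 (Copp (Cminus s (RtoC 1))) = Cmult (RtoC 2) (cpow_pos 2 (Copp s))).
  { rewrite (cp_exp _ _ (Cplus (RtoC 1) (Copp s))) by cring. apply cpow_succ; lra. }
  assert (hR2 : Cmult (cpow_pos 2 (Copp s)) (cpow_pos (INR 0 + 1/2) (Copp s)) = RtoC 1).
  { rewrite <- cpow_mul by (simpl; lra). rewrite (cp_arg _ 1) by (simpl; field). apply cpow_base1. }
  assert (ha0 : cpow_pos (INR 0 + 1) (Copp (Cminus s (RtoC 2))) = RtoC 1).
  { rewrite (cp_arg _ 1) by (simpl; ring). apply cpow_base1. }
  rewrite ha0, hR3 in HQ. rewrite hR3 in hR1.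
  rewrite (cp_exp 2 (Cminus (RtoC 1) s) (Copp (Cminus s (RtoC 1)))) by cring.
  rewrite hR3. unfold riemann_zeta.
  set (q := cpow_pos 2 (Copp s)) in *.
  set (p := cpow_pos (INR 0 + 1/2) (Copp s)) in *.
  set (Z1 := hurwitz_zeta (Cminus s (RtoC 1)) 1) in *.
  set (Z2 := hurwitz_zeta (Cminus s (RtoC 2)) 1) in *.
  set (Zh1 := hurwitz_zeta (Cminus s (RtoC 1)) (1/2)) in *.
  set (Zh0 := hurwitz_zeta s (1/2)) in *.
  clearbody q p Z1 Z2 Zh1 Zh0.
  replace (Cmult (RtoC (1 / 8))
       (Cminus (Cplus (Cmult (Cplus (RtoC 1) (Cmult (RtoC 2) q)) Z1) Z2)
          (Cmult (Cmult (RtoC 2) q) (Cplus Zh1 (Cmult (RtoC (1 / 2)) Zh0)))))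
    with (Cplus (Cplus (Cmult (RtoC (1 / 8)) (Cminus Z2 (RtoC 1))) (Cmult (RtoC (1 / 4)) (Cmult (Cmult (RtoC 2) q) Z1)))
          (Cmult (RtoC (- (1 / 8))) (Cmult q (Cminus Zh0 p)))).
  exact HQ.
  rewrite (Cmult_plus_distr_l (Cmult (RtoC 2) q) Zh1).
  replace (Cmult (Cmult (RtoC 2) q) Zh1) with (Cminus Z1 (Cmult (Cmult (RtoC 2) q) Z1)) by (rewrite hR1 at 1; cring).
  replace (Cmult q (Cminus Zh0 p)) with (Cminus (Cmult q Zh0) (RtoC 1)) by (rewrite <- hR2; cring).
  cfield.
Qed.
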